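(* Let $X\subseteq\mathbb{R}^d$ be a finite set of base points and let $DG$ be the Delaunay graph constructed on $X$. If any single edge $\{u,v\}$ is removed from $DG$ (giving a graph $G'$), then there exists a query $q\in\mathbb{R}^d$ such that the $2$-Neighboring Graph $NG_{2,q}$ of $q$ in $G'$ consists of two isolated vertices (i.e., has no edges).
   Context: Delaunay graph $DG$ on $X$: two points $u,v\in X$ are joined by an edge if and only if there exists a sphere passing through $u$ and $v$ with no other point of $X$ inside it; as a graph index, each undirected edge is treated as a pair of directed edges in both directions, and removing the edge removes both directions. For a query $q$, $N_{i,q}$ denotes the $i$-th nearest neighbour of $q$ in $X$ (with respect to the distance $\delta$). For a directed graph $G=(V,E)$ on $X$, $NG_{S,q}$ is the subgraph of $G$ induced by $\{N_{1,q},\dots,N_{S,q}\}$. *)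

(* Defs.v *)
From HB Require Import structures.
From mathcomp Require Import all_boot all_order all_algebra.
From mathcomp Require Import reals.
From mathcomp Require Import finmap.
Set Implicit Arguments. Unset Strict Implicit. Unset Printing Implicit Defensive.
Import Order.TTheory GRing.Theory Num.Theory.
Local Open Scope ring_scope.
Local Open Scope fset_scope.

Section Delaunay.
Variables (R : realType) (d : nat).
Notation pt := 'rV[R]_d.

Definition delta (x y : pt) : R :=
  Num.sqrt (\sum_(i < d) (x ord0 i - y ord0 i) ^+ 2).

(* Delaunay graph DG on X (as a symmetric directed relation): u,v in X,
   distinct, and some sphere (centre c, radius r) passes through u and v
   with no other point of X strictly inside it. *)
Definition delaunay_edge (X : {fset pt}) (u v : pt) : Prop :=
  [/\ u \in X, v \in X, u != v &
      exists (c : pt) (r : R),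
        [/\ delta c u = r, delta c v = r &
            forall w, w \in X -> w != u -> w != v -> ~ (delta c w < r)]].

Definition remove_edge (E : pt -> pt -> Prop) (u v : pt) : pt -> pt -> Prop :=
  fun a b => E a b /\ ~ ((a = u /\ b = v) \/ (a = v /\ b = u)).

(* s is an ordering N_{1,q}, N_{2,q}, ... of X by nondecreasing distance
   to q (ties broken arbitrarily). *)
Definition nn_order (X : {fset pt}) (q : pt) (s : seq pt) : Prop :=
  uniq s /\ s =i X /\ sorted (fun a b => delta q a <= delta q b) s.

Definition NG_no_edges (G : pt -> pt -> Prop) (S : nat) (s : seq pt) : Prop :=
  forall a b, a \in take S s -> b \in take S s -> ~ G a b.

End Delaunay.

(* Main.v *)
Require Import Defs.
From HB Require Import structures.
From mathcomp Require Import all_boot all_order all_algebra.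
From mathcomp Require Import reals.
From mathcomp Require Import finmap.
Local Open Scope ring_scope.
Local Open Scope fset_scope.
Import Order.TTheory GRing.Theory Num.Theory.

Theorem theorem4p3 (R : realType) (d : nat) (X : {fset 'rV[R]_d})
    (u v : 'rV[R]_d) (huv : delaunay_edge X u v) :
  exists (q : 'rV[R]_d) (s : seq 'rV[R]_d),
    nn_order X q s /\
    NG_no_edges (remove_edge (delaunay_edge X) u v) 2 s.
Proof.
case: (huv) => uX vX nuv [c [r [hu hv hw]]].
pose le := fun a b : 'rV[R]_d => delta c a <= delta c b.
have tot : total le by move=> a b; rewrite /le le_total.
pose t := sort le [seq x <- enum_fset X | (x != u) && (x != v)].
exists c, [:: u, v & t]; split; last first.
  move=> a b; rewrite /= take0 !inE => /orP[] /eqP -> /orP[] /eqP -> [[_ _ nab _] H];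
    first [by move: nab; rewrite eqxx | by apply: H; left | by apply: H; right].
split.
  rewrite /= /t !inE !mem_sort !mem_filter !eqxx /= andbF /= sort_uniq orbF nuv /=.
  rewrite filter_uniq //; exact: fset_uniq.
split.
  move=> x; rewrite !inE /t mem_sort mem_filter.
  case: (eqVneq x u) => [->|xu]; first by rewrite uX.
  case: (eqVneq x v) => [->|xv] //=.
have st : sorted le t by apply: sort_sorted.
have ht : forall y, y \in t -> r <= delta c y.
  move=> y; rewrite /t mem_sort mem_filter => /andP[/andP[yu yv] yX].
  by rewrite leNgt; apply/negP => H; apply: (hw y yX yu yv).
rewrite /= hu hv lexx /=.
move: st ht; case: t => [|y t'] //= st ht.
by rewrite hv ht ?inE ?eqxx.
Qed.
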